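(* Let $\{K_t\}_{t\in(-\infty,T)}$ be a compact convex ancient solution of the planar affine normal flow shrinking to the origin as $t\to T$. Then the affine support function $\sigma(\theta,t)=s(\theta,t)\,\mathfrak{r}^{1/3}(\theta,t)$, viewed as a function of the normal angle $\theta$, satisfies $\partial_t\sigma\le 0$ for all $\theta$ and $t<T$.
   Context: Planar affine normal flow: smooth strictly convex bodies $K_t$ with boundaries evolving by $\partial_t X=-\kappa^{1/3}\nu$ ($\kappa$ curvature, $\nu$ outer unit normal); equivalently, up to tangential reparametrization, $\partial_t X=\mathfrak{n}$, where $\mathfrak{n}=\gamma_{\mathfrak{s}\mathfrak{s}}$ is the affine normal and $\mathfrak{s}$ the affine arc-length. Ancient: exists on $(-\infty,T)$, $T<\infty$. $s$ is the support function of $K_t$ (with respect to the origin, which is interior to all $K_t$) and $\mathfrak{r}=s_{\theta\theta}+s=1/\kappa$ is the radius of curvature, both as functions of the normal angle $\theta$. *)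

(* Defs.v *)
From Stdlib Require Import Reals Lra.
Open Scope R_scope.

Definition jcont_at (f : R -> R -> R) (x y : R) : Prop :=
  forall eps, 0 < eps -> exists del, 0 < del /\
    forall x' y', Rabs (x' - x) < del -> Rabs (y' - y) < del ->
      Rabs (f x' y' - f x y) < eps.

(* C^infinity on R x (-oo, T): f(theta, t) has all iterated partial
   derivatives D i j (i derivatives in theta, j in t), each jointly
   continuous on the open domain  { (theta,t) | t < T }. *)
Definition smooth_on (T : R) (f : R -> R -> R) : Prop :=
  exists D : nat -> nat -> R -> R -> R,
    (forall x y, y < T -> D O O x y = f x y) /\
    (forall i j x y, y < T ->
        derivable_pt_lim (fun u => D i j u y) x (D (S i) j x y)) /\
    (forall i j x y, y < T ->
        derivable_pt_lim (fun v => D i j x v) y (D i (S j) x y)) /\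
    (forall i j x y, y < T -> jcont_at (D i j) x y).

Definition affine_support (s r : R -> R -> R) (theta t : R) : R :=
  s theta t * Rpower (r theta t) (1/3).

(* Main.v *)
Require Import Defs.
From Stdlib Require Import Reals.
Open Scope R_scope.
From Coquelicot Require Import Coquelicot.
From Stdlib Require Import Lra Psatz ZArith.
Open Scope R_scope.


Notation dl := derivable_pt_lim.

Lemma dl_mult f g x a b : dl f x a -> dl g x b -> dl (fun y => f y * g y) x (a * g x + f x * b).
Proof. intros; exact (derivable_pt_lim_mult f g x a b H H0). Qed.
Lemma dl_plus f g x a b : dl f x a -> dl g x b -> dl (fun y => f y + g y) x (a + b).
Proof. intros; exact (derivable_pt_lim_plus f g x a b H H0). Qed.
Lemma dl_minus f g x a b : dl f x a -> dl g x b -> dl (fun y => f y - g y) x (a - b).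
Proof. intros; exact (derivable_pt_lim_minus f g x a b H H0). Qed.
Lemma dl_const c x : dl (fun _ => c) x 0.
Proof. exact (derivable_pt_lim_const c x). Qed.
Lemma dl_id x : dl (fun y => y) x 1.
Proof. exact (derivable_pt_lim_id x). Qed.
Lemma dl_eq f x a b : dl f x a -> a = b -> dl f x b.
Proof. intros; subst; auto. Qed.

Lemma dl_ext_loc f g x l d : 0 < d -> (forall y, Rabs (y - x) < d -> f y = g y) ->
  dl f x l -> dl g x l.
Proof.
  intros Hd Heq H eps He. destruct (H eps He) as [del Hdel].
  assert (Hm : 0 < Rmin del d) by (apply Rmin_pos; [apply cond_pos|lra]).
  exists (mkposreal _ Hm). intros h Hh Hhd. simpl in Hhd.
  rewrite <- (Heq x), <- (Heq (x+h)).
  - apply Hdel; auto. apply Rlt_le_trans with (1 := Hhd); apply Rmin_l.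
  - replace (x + h - x) with h by ring. apply Rlt_le_trans with (1 := Hhd); apply Rmin_r.
  - replace (x - x) with 0 by ring. rewrite Rabs_R0; lra.
Qed.

Lemma dl_ext_lt f g x l T : x < T -> (forall y, y < T -> f y = g y) -> dl f x l -> dl g x l.
Proof.
  intros Hx Heq. apply dl_ext_loc with (d := T - x). lra.
  intros y Hy. apply Heq. apply Rabs_def2 in Hy. lra.
Qed.

Lemma dl_left_nonpos g x l a : a < x -> (forall t, a < t < x -> g x < g t) -> dl g x l -> l <= 0.
Proof.
  intros Ha Hg H. destruct (Rle_lt_dec l 0) as [|Hl]; auto. exfalso.
  destruct (H l Hl) as [del Hdel].
  set (h := - Rmin (del/2) ((x - a)/2)).
  assert (Hm1 : Rmin (del/2) ((x-a)/2) <= del/2) by apply Rmin_l.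
  assert (Hm2 : Rmin (del/2) ((x-a)/2) <= (x-a)/2) by apply Rmin_r.
  assert (Hp : 0 < Rmin (del/2) ((x-a)/2)) by (apply Rmin_pos; generalize (cond_pos del); lra).
  assert (Hh : h <> 0) by (unfold h; lra).
  assert (Hha : Rabs h < del) by (unfold h; rewrite Rabs_Ropp, Rabs_pos_eq; generalize (cond_pos del); lra).
  specialize (Hdel h Hh Hha).
  assert (Hq : (g (x + h) - g x) / h < 0).
  { assert (g x < g (x+h)) by (apply Hg; unfold h; lra).
    assert (/ h < 0) by (apply Rinv_lt_0_compat; unfold h; lra).
    unfold Rdiv. nra. }
  apply Rabs_def2 in Hdel. lra.
Qed.

Lemma dl_min_zero g x l : (forall y, g x <= g y) -> dl g x l -> l = 0.
Proof.
  intros Hm H. destruct (Rtotal_order l 0) as [Hl|[Hl|Hl]]; auto; exfalso.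
  - destruct (H (-l) ltac:(lra)) as [del Hdel].
    set (h := del/2). assert (0 < del) by apply cond_pos.
    assert (Hh : h <> 0) by (unfold h; lra).
    assert (Hha : Rabs h < del) by (unfold h; rewrite Rabs_pos_eq; lra).
    specialize (Hdel h Hh Hha).
    assert (0 <= (g (x + h) - g x) / h).
    { assert (g x <= g (x+h)) by apply Hm. assert (0 < / h) by (apply Rinv_0_lt_compat; unfold h; lra).
      unfold Rdiv. nra. }
    apply Rabs_def2 in Hdel. lra.
  - destruct (H l Hl) as [del Hdel].
    set (h := -(del/2)). assert (0 < del) by apply cond_pos.
    assert (Hh : h <> 0) by (unfold h; lra).
    assert (Hha : Rabs h < del) by (unfold h; rewrite Rabs_Ropp, Rabs_pos_eq; lra).
    specialize (Hdel h Hh Hha).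
    assert ((g (x + h) - g x) / h <= 0).
    { assert (g x <= g (x+h)) by apply Hm. assert (/ h < 0) by (apply Rinv_lt_0_compat; unfold h; lra).
      unfold Rdiv. nra. }
    apply Rabs_def2 in Hdel. lra.
Qed.

Lemma second_deriv g g' x L : (forall y, g x <= g y) -> (forall y, dl g y (g' y)) -> dl g' x L -> 0 <= L.
Proof.
  intros Hm Hd H. assert (H0 : g' x = 0) by (apply (dl_min_zero g x); auto).
  destruct (Rle_lt_dec 0 L) as [|HL]; auto. exfalso.
  destruct (H (-L) ltac:(lra)) as [del Hdel]. assert (0 < del) by apply cond_pos.
  assert (Hneg : forall h, 0 < h < del -> g' (x + h) < 0).
  { intros h Hh. assert (Hh0 : h <> 0) by lra.
    assert (Hha : Rabs h < del) by (rewrite Rabs_pos_eq; lra).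
    specialize (Hdel h Hh0 Hha). rewrite H0 in Hdel. apply Rabs_def2 in Hdel.
    assert (Hq : (g' (x+h) - 0)/h < 0) by lra.
    unfold Rdiv in Hq. replace (g' (x+h)) with (((g' (x+h) - 0) * /h) * h) by (field; lra).
    nra. }
  destruct (MVT_cor2 g g' x (x + del/2)) as [c [Hc1 Hc2]]. lra.
  { intros c _. apply Hd. }
  assert (g' c < 0) by (replace c with (x + (c - x)) by ring; apply Hneg; lra).
  assert (g x <= g (x + del/2)) by apply Hm. nra.
Qed.

Lemma periodic_nat (g : R -> R) : (forall x, g (x + 2*PI) = g x) -> forall n x, g (x + 2*PI*INR n) = g x.
Proof.
  intros Hp n; induction n; intros x.
  - simpl. f_equal; ring.
  - rewrite S_INR. replace (x + 2*PI*(INR n + 1)) with ((x + 2*PI*INR n) + 2*PI) by ring.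
    rewrite Hp; auto.
Qed.

Lemma periodic_Z (g : R -> R) : (forall x, g (x + 2*PI) = g x) -> forall z x, g (x + 2*PI*IZR z) = g x.
Proof.
  intros Hp z x. destruct z as [|p|p].
  - simpl. f_equal; ring.
  - replace (IZR (Z.pos p)) with (INR (Pos.to_nat p)) by (rewrite INR_IZR_INZ, positive_nat_Z; auto).
    apply periodic_nat; auto.
  - rewrite IZR_NEG.
    replace (IZR (Z.pos p)) with (INR (Pos.to_nat p)) by (rewrite INR_IZR_INZ, positive_nat_Z; auto).
    rewrite <- (periodic_nat g Hp (Pos.to_nat p) (x + 2 * PI * - INR (Pos.to_nat p))).
    f_equal; ring.
Qed.

Lemma periodic_red (g : R -> R) : (forall x, g (x + 2*PI) = g x) -> forall x, exists y, 0 <= y <= 2*PI /\ g x = g y.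
Proof.
  intros Hp x. generalize PI_RGT_0; intro HPI.
  destruct (archimed (x / (2*PI))) as [H1 H2].
  set (u := up (x / (2*PI))) in *.
  exists (x + 2*PI*IZR (1 - u)). split.
  - rewrite minus_IZR. simpl.
    assert (Hx : x = x / (2*PI) * (2*PI)) by (field; lra).
    split; nra.
  - symmetry. apply periodic_Z; auto.
Qed.

Lemma periodic_min (g : R -> R) : (forall x, g (x + 2*PI) = g x) ->
  (forall x, 0 <= x <= 2*PI -> continuity_pt g x) -> exists x0, forall y, g x0 <= g y.
Proof.
  intros Hp Hc. generalize PI_RGT_0; intro HPI.
  destruct (continuity_ab_min g 0 (2*PI)) as [m [Hm _]]; try lra; auto.
  exists m. intros y. destruct (periodic_red g Hp y) as [y' [Hy' ->]]. auto.
Qed.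

Lemma maxp (F Fth Fthth Ft : R -> R -> R) (t0 t1 : R) :
 t0 < t1 ->
 (forall x t, t0 <= t <= t1 -> F (x + 2*PI) t = F x t) ->
 (forall x t, t0 <= t <= t1 -> continuity_2d_pt F x t) ->
 (forall x t, t0 <= t <= t1 -> dl (fun y => F y t) x (Fth x t)) ->
 (forall x t, t0 <= t <= t1 -> dl (fun y => Fth y t) x (Fthth x t)) ->
 (forall x t, t0 <= t <= t1 -> dl (fun y => F x y) t (Ft x t)) ->
 (forall x t, t0 < t <= t1 -> F x t = 0 -> Fth x t = 0 -> 0 <= Fthth x t -> 0 < Ft x t) ->
 (forall x, 0 < F x t0) ->
 forall x, 0 < F x t1.
Proof.
  intros Ht01 Hper Hc Hth Hthth Htd Hcontact Hinit x1.
  generalize PI_RGT_0; intro HPI.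
  destruct (Rlt_le_dec 0 (F x1 t1)) as [|Hneg]; auto. exfalso.
  set (E := fun y => t0 <= -y <= t1 /\ exists x, F x (-y) <= 0).
  assert (HbE : bound E).
  { exists (-t0). intros y [Hy _]. lra. }
  assert (HeE : exists y, E y).
  { exists (-t1). split. rewrite Ropp_involutive; lra. exists x1. rewrite Ropp_involutive; auto. }
  destruct (completeness E HbE HeE) as [M [HM1 HM2]].
  set (ts := -M).
  assert (Hlow : forall t, t0 <= t <= t1 -> (exists x, F x t <= 0) -> ts <= t).
  { intros t Ht1 Ht2. assert (E (-t)) by (split; rewrite Ropp_involutive; auto).
    specialize (HM1 _ H). unfold ts. lra. }
  assert (Hgreat : forall b, (forall t, t0 <= t <= t1 -> (exists x, F x t <= 0) -> b <= t) -> b <= ts).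
  { intros b Hb. assert (M <= -b).
    { apply HM2. intros y [Hy1 Hy2]. specialize (Hb _ Hy1 Hy2). lra. }
    unfold ts; lra. }
  assert (Hts1 : ts <= t1) by (apply Hlow; [lra| exists x1; auto]).
  assert (Hts0 : t0 <= ts) by (apply Hgreat; intros t Ht _; lra).
  assert (Hbefore : forall x t, t0 <= t < ts -> 0 < F x t).
  { intros x t Ht. destruct (Rlt_le_dec 0 (F x t)) as [|Hf]; auto.
    assert (ts <= t) by (apply Hlow; [lra | exists x; auto]). lra. }
  assert (HA : forall x, 0 <= F x ts).
  { intros x. destruct (Req_dec ts t0) as [Heq|Hne].
    - rewrite Heq. left; auto.
    - destruct (Rle_lt_dec 0 (F x ts)) as [|Hf]; auto. exfalso.
      assert (Hfp : 0 < - F x ts) by lra.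
      destruct (Hc x ts ltac:(lra) (mkposreal _ Hfp)) as [del Hdel].
      assert (0 < del) by apply cond_pos.
      assert (Hm : 0 < Rmin del (ts - t0)) by (apply Rmin_pos; lra).
      set (t := ts - Rmin del (ts - t0) / 2).
      assert (Hm1 : Rmin del (ts - t0) <= del) by apply Rmin_l.
      assert (Hm2 : Rmin del (ts - t0) <= ts - t0) by apply Rmin_r.
      assert (Hx : Rabs (x - x) < del) by (replace (x - x) with 0 by ring; rewrite Rabs_R0; lra).
      assert (Ht' : Rabs (t - ts) < del).
      { unfold t. replace (ts - Rmin del (ts - t0) / 2 - ts) with (-(Rmin del (ts - t0) / 2)) by ring.
        rewrite Rabs_Ropp, Rabs_pos_eq; lra. }
      specialize (Hdel x t Hx Ht'). simpl in Hdel. apply Rabs_def2 in Hdel.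
      assert (0 < F x t) by (apply Hbefore; unfold t; lra). lra. }
  assert (HB : exists xs, F xs ts <= 0).
  { apply Classical_Prop.NNPP. intros Hno.
    assert (Hallpos : forall x, 0 < F x ts).
    { intros x. destruct (Rlt_le_dec 0 (F x ts)) as [|Hf]; auto. exfalso; apply Hno; exists x; auto. }
    destruct (periodic_min (fun y => F y ts)) as [xm Hxm].
    { intros y. apply Hper; lra. }
    { intros y _. apply derivable_continuous_pt. exists (Fth y ts). apply Hth; lra. }
    set (m := F xm ts). assert (Hmpos : 0 < m) by apply Hallpos.
    destruct (uniform_continuity_2d F 0 (2*PI) t0 t1) with (eps := mkposreal _ Hmpos) as [del Hdel].
    { intros x y _ Hy. apply Hc; auto. }
    assert (0 < del) by apply cond_pos.
    assert (Hnear : forall t, t0 <= t <= t1 -> ts <= t < ts + del -> forall x, 0 < F x t).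
    { intros t Ht Ht2 x.
      destruct (periodic_red (fun y => F y t)) with (x := x) as [y [Hy Hxy]].
      { intros z. apply Hper; auto. }
      simpl in Hxy. rewrite Hxy.
      assert (Hu : Rabs (t - ts) < del) by (rewrite Rabs_pos_eq; lra).
      assert (Hyy : Rabs (y - y) < del) by (replace (y - y) with 0 by ring; rewrite Rabs_R0; lra).
      specialize (Hdel y ts y t Hy ltac:(lra) Hy Ht Hyy Hu). simpl in Hdel.
      apply Rabs_def2 in Hdel. assert (m <= F y ts) by apply Hxm. unfold m in *. lra. }
    assert (ts + del <= ts).
    { apply Hgreat. intros t Ht [x Hx].
      assert (ts <= t) by (apply Hlow; [auto | exists x; auto]).
      destruct (Rlt_le_dec t (ts + del)) as [Hlt|]; auto.
      specialize (Hnear t Ht ltac:(lra) x). lra. }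
    lra. }
  destruct HB as [xs Hxs].
  assert (Hz : F xs ts = 0) by (specialize (HA xs); lra).
  assert (Hts0' : t0 < ts).
  { destruct (Req_dec ts t0) as [Heq|]; [|lra]. rewrite Heq in Hz. specialize (Hinit xs). lra. }
  assert (Hmin : forall y, F xs ts <= F y ts) by (intros y; rewrite Hz; apply HA).
  assert (Hth0 : Fth xs ts = 0).
  { apply (dl_min_zero (fun y => F y ts) xs); auto. }
  assert (Hthth0 : 0 <= Fthth xs ts).
  { apply (second_deriv (fun y => F y ts) (fun y => Fth y ts) xs).
    - exact Hmin.
    - intros y. apply Hth; lra.
    - apply Hthth; lra. }
  assert (Hpos : 0 < Ft xs ts) by (apply Hcontact; auto; lra).
  assert (Ft xs ts <= 0).
  { apply (dl_left_nonpos (fun y => F xs y) ts _ t0).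
    - exact Hts0'.
    - intros t Ht. simpl. rewrite Hz. apply Hbefore; lra.
    - apply Htd; lra. }
  lra.
Qed.

Lemma dl_div f g x a b : dl f x a -> dl g x b -> g x <> 0 ->
  dl (fun y => f y / g y) x ((a * g x - b * f x) / (g x)²).
Proof. intros; exact (derivable_pt_lim_div f g x a b H H0 H1). Qed.
Lemma dl_opp f x a : dl f x a -> dl (fun y => - f y) x (- a).
Proof. intros; exact (derivable_pt_lim_opp f x a H). Qed.

Lemma jcont_c2d f x y : jcont_at f x y -> continuity_2d_pt f x y.
Proof.
  intros H eps. destruct (H eps (cond_pos eps)) as [d [Hd H']].
  exists (mkposreal d Hd). intros u v Hu Hv. apply H'; auto.
Qed.

Theorem mainTheorem2
  (T : R) (s ds r : R -> R -> R)
  (Hsmooth : smooth_on T s)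
  (Hper : forall theta t, t < T -> s (theta + 2 * PI) t = s theta t)
  (Hds : forall theta t, t < T -> derivable_pt_lim (fun u => s u t) theta (ds theta t))
  (Hr : forall theta t, t < T ->
          derivable_pt_lim (fun u => ds u t) theta (r theta t - s theta t))
  (Hrpos : forall theta t, t < T -> 0 < r theta t)
  (Hspos : forall theta t, t < T -> 0 < s theta t)
  (Hflow : forall theta t, t < T ->
          derivable_pt_lim (fun v => s theta v) t (- Rpower (r theta t) (-(1/3))))
  (Hshrink : forall eps, 0 < eps -> exists del, 0 < del /\
          forall t theta, T - del < t -> t < T -> Rabs (s theta t) < eps) :
  forall theta t, t < T ->
    exists l, derivable_pt_lim (fun v => affine_support s r theta v) t l /\ l <= 0.
Proof.
  destruct Hsmooth as [D [HD0 [HDth [HDt HDc]]]].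
  generalize PI_RGT_0; intro HPI.
  assert (HperD : forall j x t, t < T -> D 0%nat j (x + 2*PI) t = D 0%nat j x t).
  { induction j; intros x t Ht.
    - rewrite !HD0; auto.
    - apply (uniqueness_limite (fun v => D 0%nat j x v) t).
      + apply (dl_ext_lt (fun v => D 0%nat j (x + 2*PI) v) _ t _ T Ht).
        * intros y Hy; apply IHj; auto.
        * apply HDt; auto.
      + apply HDt; auto. }
  assert (Hds_eq : forall x t, t < T -> ds x t = D 1%nat 0%nat x t).
  { intros x t Ht. apply (uniqueness_limite (fun u => s u t) x); auto.
    apply (dl_ext_loc (fun u => D 0%nat 0%nat u t) _ x _ 1); [lra| intros; apply HD0; auto|].
    apply HDth; auto. }
  assert (Hr_eq : forall x t, t < T -> r x t = D 2%nat 0%nat x t + D 0%nat 0%nat x t).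
  { intros x t Ht.
    assert (r x t - s x t = D 2%nat 0%nat x t).
    { apply (uniqueness_limite (fun u => ds u t) x); auto.
      apply (dl_ext_loc (fun u => D 1%nat 0%nat u t) _ x _ 1); [lra| intros; symmetry; apply Hds_eq; auto|].
      apply HDth; auto. }
    rewrite HD0 by auto. lra. }
  set (a := fun x t => Rpower (r x t) (1/3)).
  assert (Hapos : forall x t, 0 < a x t) by (intros; unfold a, Rpower; apply exp_pos).
  assert (Hacube : forall x t, t < T -> a x t * a x t * a x t = r x t).
  { intros x t Ht. unfold a.
    replace (Rpower (r x t) (1/3) * Rpower (r x t) (1/3) * Rpower (r x t) (1/3))
      with (Rpower (r x t) (1/3) ^ 3) by ring.
    rewrite <- Rpower_pow by (unfold Rpower; apply exp_pos).
    rewrite Rpower_mult. replace (1/3 * INR 3) with 1 by (simpl; field).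
    apply Rpower_1; auto. }
  assert (Hv : forall x t, t < T -> D 0%nat 1%nat x t = - / a x t).
  { intros x t Ht. apply (uniqueness_limite (fun v => s x v) t).
    - apply (dl_ext_lt (fun v => D 0%nat 0%nat x v) _ t _ T Ht); [intros; apply HD0; auto|]. apply HDt; auto.
    - unfold a. rewrite <- Rpower_Ropp. auto. }
  assert (Hvneg : forall x t, t < T -> D 0%nat 1%nat x t < 0).
  { intros x t Ht. rewrite Hv by auto. specialize (Hapos x t). assert (0 < / a x t) by (apply Rinv_0_lt_compat; auto). lra. }
  assert (Hcub : forall x t, t < T ->
     D 0%nat 1%nat x t * D 0%nat 1%nat x t * D 0%nat 1%nat x t * (D 2%nat 0%nat x t + D 0%nat 0%nat x t) = -1).
  { intros x t Ht. rewrite Hv, <- Hr_eq, <- Hacube by auto. specialize (Hapos x t). field. lra. }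
  assert (HI : forall x t, t < T -> D 0%nat 2%nat x t =
     1/3 * (D 0%nat 1%nat x t * D 0%nat 1%nat x t * D 0%nat 1%nat x t * D 0%nat 1%nat x t) *
       (D 2%nat 1%nat x t + D 0%nat 1%nat x t)).
  { intros x t Ht.
    assert (Hd : derivable_pt_lim (fun y => (D 0%nat 1%nat x y * D 0%nat 1%nat x y * D 0%nat 1%nat x y *
                      (D 2%nat 0%nat x y + D 0%nat 0%nat x y))%R) t
       (((D 0%nat 2%nat x t * D 0%nat 1%nat x t + D 0%nat 1%nat x t * D 0%nat 2%nat x t) * D 0%nat 1%nat x t
         + D 0%nat 1%nat x t * D 0%nat 1%nat x t * D 0%nat 2%nat x t) * (D 2%nat 0%nat x t + D 0%nat 0%nat x t)
       + D 0%nat 1%nat x t * D 0%nat 1%nat x t * D 0%nat 1%nat x t * (D 2%nat 1%nat x t + D 0%nat 1%nat x t))%R).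
    { eapply dl_eq.
      - repeat first [apply dl_mult | apply dl_plus | apply HDt; assumption].
      - simpl. ring. }
    assert (Hd0 : derivable_pt_lim (fun y => (D 0%nat 1%nat x y * D 0%nat 1%nat x y * D 0%nat 1%nat x y *
                      (D 2%nat 0%nat x y + D 0%nat 0%nat x y))%R) t 0).
    { apply (dl_ext_lt (fun _ => -1) _ t _ T Ht); [intros; symmetry; apply Hcub; auto| apply dl_const]. }
    pose proof (uniqueness_limite _ _ _ _ Hd Hd0) as E.
    pose proof (Hcub x t Ht) as C. pose proof (Hvneg x t Ht) as N.
    set (R0 := (D 2%nat 0%nat x t + D 0%nat 0%nat x t)%R) in *. set (w := (D 2%nat 1%nat x t + D 0%nat 1%nat x t)%R) in *.
    set (v := D 0%nat 1%nat x t) in *. set (P := D 0%nat 2%nat x t) in *.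
    assert (E' : 3 * (v*v*v*R0) * P + v*v*v*v * w = 0).
    { replace (3 * (v*v*v*R0) * P + v*v*v*v * w) with (v * (((P * v + v * P) * v + v * v * P) * R0 + v*v*v*w)) by ring.
      rewrite E. ring. }
    rewrite C in E'. lra. }
  assert (HII : forall x t, t < T -> D 0%nat 3%nat x t =
     (4/3 * (D 0%nat 1%nat x t * D 0%nat 1%nat x t * D 0%nat 1%nat x t) * D 0%nat 2%nat x t *
       (D 2%nat 1%nat x t + D 0%nat 1%nat x t)
     + 1/3 * (D 0%nat 1%nat x t * D 0%nat 1%nat x t * D 0%nat 1%nat x t * D 0%nat 1%nat x t) *
       (D 2%nat 2%nat x t + D 0%nat 2%nat x t))%R).
  { intros x t Ht.
    assert (Hd : derivable_pt_lim (fun y => (1/3 * (D 0%nat 1%nat x y * D 0%nat 1%nat x y * D 0%nat 1%nat x y * D 0%nat 1%nat x y) *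
       (D 2%nat 1%nat x y + D 0%nat 1%nat x y))%R) t
     (4/3 * (D 0%nat 1%nat x t * D 0%nat 1%nat x t * D 0%nat 1%nat x t) * D 0%nat 2%nat x t *
       (D 2%nat 1%nat x t + D 0%nat 1%nat x t)
     + 1/3 * (D 0%nat 1%nat x t * D 0%nat 1%nat x t * D 0%nat 1%nat x t * D 0%nat 1%nat x t) *
       (D 2%nat 2%nat x t + D 0%nat 2%nat x t))%R).
    { eapply dl_eq.
      - repeat first [apply dl_mult | apply dl_plus | apply dl_const | apply HDt; assumption].
      - simpl. field. }
    apply (uniqueness_limite (fun y => D 0%nat 2%nat x y) t).
    - apply HDt; auto.
    - refine (dl_ext_lt _ _ t _ T Ht _ Hd). intros y Hy; symmetry; apply HI; auto. }
  assert (HPneg : forall x t, t < T -> D 0%nat 2%nat x t <= 0).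
  { intros x1 t1 Ht1. destruct (Rle_lt_dec (D 0%nat 2%nat x1 t1) 0) as [|HP1]; auto. exfalso.
    pose proof (Hvneg x1 t1 Ht1) as Hv1.
    set (q := D 0%nat 2%nat x1 t1 / D 0%nat 1%nat x1 t1).
    assert (Hq : q < 0).
    { unfold q, Rdiv. assert (/ D 0%nat 1%nat x1 t1 < 0) by (apply Rinv_lt_0_compat; auto). nra. }
    set (L := - / q). assert (HL : 0 < L) by (unfold L; assert (/ q < 0) by (apply Rinv_lt_0_compat; auto); lra).
    set (t0 := t1 - L). assert (Ht0 : t0 < T) by (unfold t0; lra).
    set (eps := - q / 2). assert (Heps : 0 < eps) by (unfold eps; lra).
    destruct (periodic_min (fun y => D 0%nat 2%nat y t0 / D 0%nat 1%nat y t0)) as [xm Hxm].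
    { intros y. simpl. rewrite !HperD by auto. reflexivity. }
    { intros y _. apply derivable_continuous_pt.
      exists ((D 1%nat 2%nat y t0 * D 0%nat 1%nat y t0 - D 1%nat 1%nat y t0 * D 0%nat 2%nat y t0) / (D 0%nat 1%nat y t0)²).
      refine (dl_div (fun u => D 0%nat 2%nat u t0) (fun u => D 0%nat 1%nat u t0) y _ _ _ _ _); try (apply HDth; auto). simpl. specialize (Hvneg y t0 Ht0). lra. }
    set (m0 := D 0%nat 2%nat xm t0 / D 0%nat 1%nat xm t0) in *.
    set (b := Rmax 1 (1 - m0)).
    assert (Hb1 : 1 <= b) by apply Rmax_l. assert (Hb2 : 1 - m0 <= b) by apply Rmax_r.
    set (c := t0 - / (4 * b)).
    assert (Hc : c < t0) by (unfold c; assert (0 < / (4*b)) by (apply Rinv_0_lt_compat; lra); lra).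
    set (psi := fun y => - / (4 * (y - c)) - eps).
    set (psi' := fun y => 4 / (4 * (y - c))^2).
    assert (Hpsid : forall y, c < y -> dl psi y (psi' y)).
    { intros y Hy. unfold psi, psi'. apply is_derive_Reals. auto_derive. lra. field. lra. }
    set (F := fun x y => psi y * D 0%nat 1%nat x y - D 0%nat 2%nat x y).
    assert (Hmain : forall x, 0 < F x t1).
    { apply (maxp F (fun x y => psi y * D 1%nat 1%nat x y - D 1%nat 2%nat x y)
                  (fun x y => psi y * D 2%nat 1%nat x y - D 2%nat 2%nat x y)
                  (fun x y => psi' y * D 0%nat 1%nat x y + psi y * D 0%nat 2%nat x y - D 0%nat 3%nat x y) t0 t1).
      - unfold t0; lra.
      - intros x t Ht. unfold F. rewrite !HperD by lra. reflexivity.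
      - intros x t Ht. unfold F. apply continuity_2d_pt_minus.
        + apply continuity_2d_pt_mult.
          * apply (continuity_1d_2d_pt_comp psi (fun _ v => v)).
            -- apply derivable_continuous_pt. exists (psi' t). apply Hpsid. lra.
            -- apply continuity_2d_pt_id2.
          * apply jcont_c2d, HDc. lra.
        + apply jcont_c2d, HDc. lra.
      - intros x t Ht. unfold F. eapply dl_eq.
        + apply dl_minus; [apply dl_mult; [apply dl_const | apply HDth; lra] | apply HDth; lra].
        + cbv beta; ring.
      - intros x t Ht. eapply dl_eq.
        + apply dl_minus; [apply dl_mult; [apply dl_const | apply HDth; lra] | apply HDth; lra].
        + cbv beta; ring.
      - intros x t Ht. unfold F. eapply dl_eq.
        + apply dl_minus; [apply dl_mult; [apply Hpsid; lra | apply HDt; lra] | apply HDt; lra].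
        + cbv beta; ring.
      - intros x t Ht HF _ Hthth. unfold F in HF. simpl in Hthth.
        assert (HtT : t < T) by lra.
        pose proof (HI x t HtT) as I1. pose proof (HII x t HtT) as I2. pose proof (Hvneg x t HtT) as N.
        assert (Hk : 0 < / (4 * (t - c))) by (apply Rinv_0_lt_compat; lra).
        assert (Hp : psi t = - / (4 * (t - c)) - eps) by reflexivity.
        assert (Hp' : psi' t = 4 * (/ (4 * (t - c)) * / (4 * (t - c)))) by (unfold psi'; field; lra).
        set (k := / (4 * (t - c))) in *.
        set (p := psi t) in *. set (p' := psi' t) in *.
        set (v := D 0%nat 1%nat x t) in *. set (P := D 0%nat 2%nat x t) in *.
        set (v2 := D 2%nat 1%nat x t) in *. set (P2 := D 2%nat 2%nat x t) in *.
        set (P' := D 0%nat 3%nat x t) in *.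
        assert (HPv : P = p * v) by lra.
        assert (HW : v*v*v*(v2 + v) = 3 * p).
        { apply (Rmult_eq_reg_l v); [|lra].
          replace (v * (v*v*v*(v2+v))) with (3 * (1/3 * (v*v*v*v) * (v2 + v))) by field.
          rewrite <- I1, HPv. ring. }
        assert (H4 : 0 <= v*v*v*v) by nra.
        assert (HP2 : v*v*v*v*P2 <= v*v*v*v*(p*v2)) by nra.
        assert (HP' : P' <= 5 * p * p * v).
        { rewrite I2.
          replace (4 / 3 * (v * v * v) * P * (v2 + v)) with (4/3 * P * (v*v*v*(v2+v))) by ring.
          rewrite HW, HPv.
          assert (1/3 * (v*v*v*v) * (P2 + p*v) <= 1/3 * (v*v*v*(v2 + v)) * (p * v)) by nra.
          rewrite HW in H. lra. }
        assert (Hpp : p' < 4 * p * p) by (rewrite Hp', Hp; nra).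
        assert (0 < v * (p' - 4 * p * p)) by nra.
        rewrite HPv. nra.
      - intros x. pose proof (Hvneg x t0 Ht0) as N. pose proof (Hxm x) as Hx. simpl in Hx.
        assert (Hpsi0 : psi t0 = - b - eps) by (unfold psi, c; field; lra).
        unfold F. rewrite Hpsi0.
        assert (HQ : D 0%nat 2%nat x t0 = (D 0%nat 2%nat x t0 / D 0%nat 1%nat x t0) * D 0%nat 1%nat x t0) by (field; lra).
        rewrite HQ. nra. }
    specialize (Hmain x1). unfold F in Hmain.
    assert (Ht1c : L <= t1 - c) by (unfold c, t0; assert (0 < / (4*b)) by (apply Rinv_0_lt_compat; lra); lra).
    assert (Hinv : / (4 * (t1 - c)) <= / (4 * L)) by (apply Rinv_le_contravar; lra).
    assert (HL4 : / (4 * L) = - q / 4) by (unfold L; field; lra).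
    assert (Hpsi1 : 3 * q / 4 <= psi t1) by (unfold psi, eps in *; lra).
    assert (HP1q : D 0%nat 2%nat x1 t1 = q * D 0%nat 1%nat x1 t1) by (unfold q; field; lra).
    rewrite HP1q in Hmain. nra. }
  intros th t Ht.
  pose proof (Hvneg th t Ht) as N. pose proof (HPneg th t Ht) as HP.
  pose proof (Hspos th t Ht) as Hs. rewrite <- HD0 in Hs by auto.
  exists (- ((D 0%nat 1%nat th t * D 0%nat 1%nat th t - D 0%nat 2%nat th t * D 0%nat 0%nat th t)
             / (D 0%nat 1%nat th t)²)).
  split.
  - apply (dl_ext_lt (fun y => - (D 0%nat 0%nat th y / D 0%nat 1%nat th y)) _ t _ T Ht).
    + intros y Hy. unfold affine_support. rewrite HD0, Hv by auto. fold (a th y).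
      specialize (Hapos th y). field. lra.
    + apply dl_opp. apply dl_div; try (apply HDt; auto). lra.
  - assert (0 < (D 0%nat 1%nat th t)²) by (unfold Rsqr; nra).
    assert (0 <= (D 0%nat 1%nat th t * D 0%nat 1%nat th t - D 0%nat 2%nat th t * D 0%nat 0%nat th t)) by nra.
    assert (0 <= (D 0%nat 1%nat th t * D 0%nat 1%nat th t - D 0%nat 2%nat th t * D 0%nat 0%nat th t)
             / (D 0%nat 1%nat th t)²) by (apply Rdiv_le_0_compat; auto).
    lra.
Qed.
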